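(* Let $x_j$ be a real random variable and $\boldsymbol{x}_C$ a random vector independent of $x_j$. If $f(x_j,\boldsymbol{x}_C)=g(x_j)h(\boldsymbol{x}_C)$, where $g$ is a function of $x_j$ only and $h$ is a function of $\boldsymbol{x}_C$ only, then $$\mathbb{E}_{\boldsymbol{x}_C}\big[I_{ice}(x_j;\boldsymbol{x}_C)\big]\ge I_{pdp}(x_j).$$ Moreover, equality holds if $h$ is a nonnegative function.
   Context: Inputs are $\boldsymbol{x}=(x_1,\dots,x_m)$ with independent components; $C=\{1,\dots,m\}\setminus\{j\}$ and $\boldsymbol{x}_C$ denotes the vector of the inputs with indices in $C$. $\mathbb{E}_{z}$ and $\mathbb{V}_{z}$ denote expectation and variance taken with respect to the random variable $z$ only, the other arguments being held fixed. For a fixed value of $\boldsymbol{x}_C$, the ICE importance is $I_{ice}(x_j;\boldsymbol{x}_C)=\sqrt{\mathbb{V}_{x_j}[f(x_j,\boldsymbol{x}_C)]}$. The PDP importance is $I_{pdp}(x_j)=\sqrt{\mathbb{V}_{x_j}\big[\mathbb{E}_{\boldsymbol{x}_C}[f(x_j,\boldsymbol{x}_C)]\big]}$. All expectations and variances involved are assumed to exist and be finite. *)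

(* Defs.v *)
From HB Require Import structures.
From mathcomp Require Import all_boot all_order all_algebra.
From mathcomp Require Import all_classical all_reals all_analysis.
Set Implicit Arguments. Unset Strict Implicit. Unset Printing Implicit Defensive.
Import Order.TTheory GRing.Theory Num.Theory.
Local Open Scope ring_scope.

Definition Ex d (T : measurableType d) (R : realType) (P : probability T R)
  (F : T -> R) : R := fine (\int[P]_x (F x)%:E)%E.

Definition Var d (T : measurableType d) (R : realType) (P : probability T R)
  (F : T -> R) : R := Ex P (fun x => (F x - Ex P F) ^+ 2).

(* ICE importance: mu = law of x_j, c = fixed value of x_C. *)
Definition I_ice d (TC : measurableType d) (R : realType) (mu : probability R R)
  (f : R -> TC -> R) (c : TC) : R := Num.sqrt (Var mu (fun a => f a c)).

(* PDP importance: mu = law of x_j, nu = law of x_C. *)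
Definition I_pdp d (TC : measurableType d) (R : realType) (mu : probability R R)
  (nu : probability TC R) (f : R -> TC -> R) : R :=
  Num.sqrt (Var mu (fun a => Ex nu (fun c => f a c))).

(* Main.v *)
Require Import Defs.
From HB Require Import structures.
From mathcomp Require Import all_boot all_order all_algebra.
From mathcomp Require Import all_classical all_reals all_analysis.
Import Order.TTheory GRing.Theory Num.Theory.
Local Open Scope ring_scope.

Lemma fineZ_ge0 (R : realType) (k : R) (x : \bar R) : 0 <= k ->
  fine (k%:E * x)%E = k * fine x.
Proof.
move=> k0; case: x => [r| |] //=.
- case: (eqVneq k 0) => [->|kn0]; first by rewrite mul0e /= mul0r.
  have kp : 0 < k by rewrite lt_neqAle eq_sym kn0.
  by rewrite gt0_muley ?lte_fin //= mulr0.
- case: (eqVneq k 0) => [->|kn0]; first by rewrite mul0e /= mul0r.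
  have kp : 0 < k by rewrite lt_neqAle eq_sym kn0.
  by rewrite gt0_muleNy ?lte_fin //= mulr0.
Qed.

Lemma ExZ_ge0 d (T : measurableType d) (R : realType) (P : probability T R)
  (F : T -> R) (k : R) : measurable_fun setT F -> (forall x, 0 <= F x) -> 0 <= k ->
  Ex P (fun x => k * F x) = k * Ex P F.
Proof.
move=> mF F0 k0; rewrite /Ex.
under eq_integral do rewrite EFinM.
rewrite ge0_integralZl_EFin //; last first.
  - by apply/measurable_realfun.measurable_EFinP.
  - by move=> x _; rewrite lee_fin.
by rewrite fineZ_ge0.
Qed.

Lemma ExZ d (T : measurableType d) (R : realType) (P : probability T R)
  (F : T -> R) (k : R) : P.-integrable setT (fun x => (F x)%:E) ->
  Ex P (fun x => k * F x) = k * Ex P F.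
Proof.
move=> iF; rewrite /Ex.
under eq_integral do rewrite EFinM.
rewrite integralZl //.
have := integrable_fin_num measurableT iF.
by case: (\int[P]_(x in setT) (F x)%:E)%E.
Qed.

Theorem theorem2 (R : realType) (d : measure_display) (TC : measurableType d)
  (mu : probability R R) (nu : probability TC R)
  (g : R -> R) (h : TC -> R) :
  mu.-integrable setT (fun a => (g a)%:E) ->
  mu.-integrable setT (fun a => (g a ^+ 2)%:E) ->
  nu.-integrable setT (fun c => (h c)%:E) ->
  let f := fun a c => g a * h c in
  I_pdp mu nu f <= Ex nu (fun c => I_ice mu f c) /\
  ((forall c, 0 <= h c) -> Ex nu (fun c => I_ice mu f c) = I_pdp mu nu f).
Proof.
move=> ig ig2 ih f.
have mg : measurable_fun setT g.
  by apply/measurable_realfun.measurable_EFinP; exact: measurable_int ig.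
have mh : measurable_fun setT h.
  by apply/measurable_realfun.measurable_EFinP; exact: measurable_int ih.
set m := Ex mu g.
set s := Num.sqrt (Var mu g).
have E1 k : Ex mu (fun a => g a * k) = m * k.
  by rewrite mulrC -ExZ //; congr Ex; apply: funext => a; rewrite mulrC.
have V1 k : Var mu (fun a => g a * k) = k ^+ 2 * Var mu g.
  rewrite /Var E1 -ExZ_ge0 ?sqr_ge0 // -/m.
  - by congr Ex; apply: funext => a; rewrite -mulrBl exprMn mulrC.
  - apply: measurable_realfun.measurable_funX.
    by apply: measurable_realfun.measurable_funB => //; exact: measurable_cst.
  - by move=> a; exact: sqr_ge0.
have I1 c : I_ice mu f c = `|h c| * s.
  by rewrite /I_ice /f V1 sqrtrM ?sqr_ge0 // sqrtr_sqr.
have E2 a : Ex nu (fun c => f a c) = g a * Ex nu h by rewrite /f ExZ.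
have I2 : I_pdp mu nu f = `|Ex nu h| * s.
  rewrite /I_pdp.
  under eq_fun do rewrite E2.
  by rewrite V1 sqrtrM ?sqr_ge0 // sqrtr_sqr.
have E3 : Ex nu (fun c => I_ice mu f c) = s * Ex nu (fun c => `|h c|).
  rewrite -ExZ_ge0 ?sqrtr_ge0 //.
  - by congr Ex; apply: funext => c; rewrite I1 mulrC.
  - exact: measurableT_comp (@measurable_realfun.normr_measurable _ _) mh.
have L : `|Ex nu h| <= Ex nu (fun c => `|h c|).
  rewrite /Ex -fine_abse; last exact: integrable_fin_num.
  apply: fine_le.
  - by rewrite abse_fin_num; exact: integrable_fin_num.
  - under eq_integral do rewrite -abse_EFin.
    exact: (integrable_fin_num measurableT (integrable_abse ih)).
  under [X in (_ <= X)%E]eq_integral do rewrite -abse_EFin.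
  by apply: le_abse_integral => //; exact: measurable_int ih.
rewrite E3 I2; split.
  by rewrite mulrC ler_wpM2l ?sqrtr_ge0.
move=> h0.
have -> : Ex nu (fun c => `|h c|) = Ex nu h.
  by congr Ex; apply: funext => c; rewrite ger0_norm.
rewrite mulrC ger0_norm //.
by apply: fine_ge0; apply: integral_ge0 => c _; rewrite lee_fin.
Qed.
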